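(* Let $n\ge1$. Then $v_1+v_2+\cdots+v_{2n}=n(n+1)$.
   Context: $k$ is a field of characteristic zero, $\mathcal O_n=k[x]/(x^{n+1})$, elements of $\mathcal O_n$ identified with multiplication operators, $\operatorname{ad}_x(\delta)=x\delta-\delta x$. The order filtration is $\mathcal D^p(\mathcal O_n)=\{\delta\in\operatorname{End}_k(\mathcal O_n):[f_0,[f_1,\dots,[f_p,\delta]\dots]]=0\ \forall f_i\in\mathcal O_n\}$. For $\delta\in\mathcal D^p(\mathcal O_n)$, $\operatorname{ad}_x^p(\delta)$ is multiplication by an element of $\mathcal O_n$ and $\operatorname{ad}_x^p:\mathcal D^p(\mathcal O_n)\to\mathcal O_n$ is $\mathcal O_n$-linear, so its image is an ideal $(x^{v_p})$ of $\mathcal O_n$; $v_p\in\{0,\dots,n\}$ denotes the corresponding exponent. *)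

(* Defs.v *)
From HB Require Import structures.
From mathcomp Require Import all_boot all_order all_algebra.
Set Implicit Arguments. Unset Strict Implicit. Unset Printing Implicit Defensive.
Import GRing.Theory.
Local Open Scope ring_scope.

(* O_n = k[x]/(x^{n+1}) is modelled by the coordinate space k^{n+1} with basis
   1, x, ..., x^n (column vectors); End_k(O_n) = 'M[k]_(n.+1). *)

(* multiplication by x : column j (= x^j) is sent to x^(j+1) (or 0 if j = n) *)
Definition Xmx (k : fieldType) (n : nat) : 'M[k]_(n.+1) :=
  \matrix_(i, j) ((i == j.+1 :> nat)%:R).

Definition mulop (k : fieldType) (n : nat) (f : {poly k}) : 'M[k]_(n.+1) :=
  horner_mx (Xmx k n) f.

Definition commx (k : fieldType) (n : nat) (a d : 'M[k]_(n.+1)) : 'M[k]_(n.+1) :=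
  a *m d - d *m a.

Definition adx (k : fieldType) (n : nat) (d : 'M[k]_(n.+1)) : 'M[k]_(n.+1) :=
  commx (Xmx k n) d.

Definition inDp (k : fieldType) (n p : nat) (d : 'M[k]_(n.+1)) : Prop :=
  forall fs : seq {poly k}, size fs = p.+1 ->
    foldr (fun f e => commx (mulop n f) e) d fs = 0.

Definition vp_spec (k : fieldType) (n p v : nat) : Prop :=
  (v <= n)%N /\
  forall A : 'M[k]_(n.+1),
    (exists d : 'M[k]_(n.+1), @inDp k n p d /\ iter p (@adx k n) d = A) <->
    (exists g : {poly k}, A = @mulop k n ('X^v * g)).

(* Main.v *)
Require Import Defs.
From HB Require Import structures.
From mathcomp Require Import all_boot all_order all_algebra ring zify.
Set Implicit Arguments. Unset Strict Implicit. Unset Printing Implicit Defensive.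
Import GRing.Theory.
Local Open Scope ring_scope.



Definition ent (k : fieldType) (n : nat) (M : 'M[k]_(n.+1)) (i j : nat) : k :=
  if (i < n.+1)%N && (j < n.+1)%N then M (inord i) (inord j) else 0.

Lemma ent_ord (k : fieldType) (n : nat) (M : 'M[k]_(n.+1)) (i j : 'I_n.+1) :
  M i j = ent M i j.
Proof. by rewrite /ent !ltn_ord !inord_val. Qed.

Lemma ent_out (k : fieldType) (n : nat) (M : 'M[k]_(n.+1)) i j :
  ~~ ((i < n.+1)%N && (j < n.+1)%N) -> ent M i j = 0.
Proof. by rewrite /ent => /negbTE ->. Qed.

Lemma mx_ent (k : fieldType) (n : nat) (M M' : 'M[k]_(n.+1)) :
  (forall i j, (i < n.+1)%N -> (j < n.+1)%N -> ent M i j = ent M' i j) -> M = M'.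
Proof. by move=> H; apply/matrixP=> i j; rewrite !ent_ord H. Qed.

Lemma entXl (k : fieldType) (n : nat) (M : 'M[k]_(n.+1)) i j :
  ent (Xmx k n *m M) i j =
  if (i < n.+1)%N && (j < n.+1)%N then (if i is i'.+1 then ent M i' j else 0) else 0.
Proof.
rewrite /ent; case: ifP => // /andP[hi hj]; rewrite mxE.
case: i hi => [|i'] hi /=.
  by rewrite big1 // => l _; rewrite /Xmx mxE inordK // mul0r.
have hi' : (i' < n.+1)%N by apply: ltnW.
rewrite hi' hj (bigD1 (inord i')) //= big1 ?addr0.
  by rewrite /Xmx mxE !inordK // eqxx mul1r.
move=> l hl; rewrite /Xmx mxE inordK //.
case: eqP => [e|]; last by rewrite mul0r.
by case/eqP: hl; apply: val_inj; rewrite /= inordK //; case: e.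
Qed.

Lemma entXr (k : fieldType) (n : nat) (M : 'M[k]_(n.+1)) i j :
  ent (M *m Xmx k n) i j =
  if (i < n.+1)%N && (j < n.+1)%N then ent M i j.+1 else 0.
Proof.
rewrite /ent; case: ifP => // /andP[hi hj]; rewrite mxE hi /=.
case: (ltnP j.+1 n.+1) => hj1 /=.
  rewrite (bigD1 (inord j.+1)) //= big1 ?addr0.
    by rewrite /Xmx mxE !inordK // eqxx mulr1.
  move=> l hl; rewrite /Xmx mxE inordK //.
  case: eqP => [e|]; last by rewrite mulr0.
  by case/eqP: hl; apply: val_inj; rewrite /= inordK // -e.
rewrite big1 // => l _; rewrite /Xmx mxE inordK //.
case: eqP => [e|]; last by rewrite mulr0.
by move: (ltn_ord l); rewrite e ltnNge hj1.
Qed.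

Lemma entB (k : fieldType) (n : nat) (M M' : 'M[k]_(n.+1)) i j :
  ent (M - M') i j = ent M i j - ent M' i j.
Proof. by rewrite /ent; case: ifP => _; rewrite ?subr0 ?mxE. Qed.

Lemma entZ (k : fieldType) (n : nat) a (M : 'M[k]_(n.+1)) i j :
  ent (a *: M) i j = a * ent M i j.
Proof. by rewrite /ent; case: ifP => _; rewrite ?mulr0 ?mxE. Qed.

Lemma entad (k : fieldType) (n : nat) (M : 'M[k]_(n.+1)) i j :
  ent (adx M) i j =
  if (i < n.+1)%N && (j < n.+1)%N then
    (if i is i'.+1 then ent M i' j else 0) - ent M i j.+1 else 0.
Proof.
rewrite /adx /commx entB entXl entXr; case: ifP => //; by rewrite subr0.
Qed.

Lemma entXn (k : fieldType) (n v : nat) i j :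
  ent (Xmx k n ^+ v) i j =
  if (i < n.+1)%N && (j < n.+1)%N then (i == (j + v)%N)%:R else 0.
Proof.
elim: v i j => [|v IH] i j.
  rewrite expr0 /ent; case: ifP => // /andP[hi hj]; rewrite mxE addn0.
  have -> : (inord i == inord j :> 'I_n.+1) = (i == j) by apply/eqP/eqP => [/(congr1 val)|->] //; rewrite /= !inordK.
  by [].

rewrite exprS -mulmxE entXl; case: ifP => // /andP[hi hj].
case: i hi => [|i'] hi /=; first by rewrite addnS.
by rewrite IH (ltnW hi) hj addnS.
Qed.



Definition Dp (k : fieldType) (a : k) (Q : {poly k}) : {poly k} :=
  Q - (Q \Po ('X + a%:P)).

Lemma DpD (k : fieldType) (a : k) P Q : Dp a (P + Q) = Dp a P + Dp a Q.
Proof. by rewrite /Dp comp_polyD opprD addrACA. Qed.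

Lemma DpZ (k : fieldType) (a c : k) Q : Dp a (c *: Q) = c *: Dp a Q.
Proof. by rewrite /Dp comp_polyZ scalerBr. Qed.

Lemma iterDpD (k : fieldType) (a : k) m P Q :
  iter m (Dp a) (P + Q) = iter m (Dp a) P + iter m (Dp a) Q.
Proof. by elim: m => //= m ->; rewrite DpD. Qed.

Lemma iterDpZ (k : fieldType) (a c : k) m Q :
  iter m (Dp a) (c *: Q) = c *: iter m (Dp a) Q.
Proof. by elim: m => //= m ->; rewrite DpZ. Qed.

Lemma hornerDp (k : fieldType) (a : k) Q x : (Dp a Q).[x] = Q.[x] - Q.[x + a].
Proof. by rewrite /Dp hornerD hornerN horner_comp hornerD hornerX hornerC. Qed.

Lemma size_Dp (k : fieldType) (a : k) Q : (size (Dp a Q) <= (size Q).-1)%N.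
Proof.
have [hQ|hQ] := leqP (size Q) 1.
  by rewrite (size1_polyC hQ) /Dp comp_polyC subrr size_poly0.
have h2 : size ('X + a%:P) = 2 by rewrite size_XaddC.
have hs : size (Q \Po ('X + a%:P)) = size Q by rewrite size_comp_poly2.
have hl : lead_coef (Q \Po ('X + a%:P)) = lead_coef Q.
  by rewrite lead_coef_comp ?h2 // lead_coefXaddC expr1n mulr1.
apply/leq_sizeP => j hj; rewrite /Dp coefB.
case: (ltngtP j (size Q).-1) => hj'.
- by move: hj; rewrite leqNgt hj'.
- by rewrite !nth_default ?subrr ?hs //; move: hj'; case: (size Q).
- by rewrite hj'; move: hl; rewrite /lead_coef hs => ->; rewrite subrr.
Qed.

Lemma iterDp_small (k : fieldType) (a : k) m (Q : {poly k}) :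
  (size Q <= m)%N -> iter m (Dp a) Q = 0.
Proof.
elim: m Q => [|m IH] Q hQ.
  by move: hQ; rewrite leqn0 size_poly_eq0 => /eqP.
rewrite iterSr IH //; apply: leq_trans (size_Dp _ _) _.
by move: hQ; case: (size Q).
Qed.

Lemma comp_Xn (k : fieldType) (q : {poly k}) m : 'X^m \Po q = q ^+ m.
Proof.
elim: m => [|m IH]; first by rewrite expr0 comp_polyC.
by rewrite exprS comp_polyM comp_polyX IH exprS.
Qed.

Lemma coef_XaddCn (k : fieldType) n j :
  (('X + 1%:P) ^+ n : {poly k})`_j = ('C(n, j))%:R.
Proof.
elim: n j => [|n IH] j.
  by rewrite expr0 coefC; case: j.
rewrite exprSr mulrDr mulr1 coefD coefMX.
case: j => [|j] /=; rewrite !IH; first by rewrite !bin0 add0r.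
by rewrite binS natrD addrC.
Qed.

Lemma Dp_Xn (k : fieldType) m :
  exists R : {poly k}, Dp 1 'X^(m.+1) = - ((m.+1)%:R *: 'X^m) + R /\ (size R <= m)%N.
Proof.
exists (Dp 1 'X^(m.+1) + (m.+1)%:R *: 'X^m); split; first by rewrite addrCA addNr addr0.
apply/leq_sizeP => j hj.
rewrite /Dp comp_Xn coefD coefB coefZ !coefXn coef_XaddCn.
case: (ltngtP j m.+1) => hj'.
- have -> : j = m by apply/eqP; rewrite eqn_leq hj -ltnS hj'.
  by rewrite eqxx binSn mulr1 /= sub0r addNr.
- by rewrite (gtn_eqF (ltnW hj')) bin_small //= mulr0 addr0 subrr.
- by rewrite hj' binn (gtn_eqF (ltnSn m)) /= mulr0 addr0 subrr.
Qed.

Lemma iterDp_Xn (k : fieldType) m :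
  iter m (Dp (1 : k)) 'X^m = ((-1) ^+ m * (m`!)%:R)%:P.
Proof.
elim: m => [|m IH]; first by rewrite expr0 mul1r.
have [R [hR sR]] := Dp_Xn k m.
rewrite iterSr hR iterDpD (iterDp_small _ sR) addr0.
rewrite -scaleNr iterDpZ IH -mul_polyC -polyCM; congr (_%:P).
by rewrite factS natrM exprS; ring.
Qed.



Lemma monic_split (k : fieldType) (P : {poly k}) m :
  P \is monic -> size P = m.+1 -> (size (P - 'X^m)%R <= m)%N.
Proof.
move=> mP sP; apply/leq_sizeP => j hj; rewrite coefB coefXn.
case: (ltngtP j m) => hj'.
- by move: hj; rewrite leqNgt hj'.
- by rewrite nth_default ?sP //= subr0.
- by rewrite hj'; move/monicP: mP; rewrite /lead_coef sP /= => ->; rewrite subrr.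
Qed.

Lemma iterDp_monic (k : fieldType) (P : {poly k}) m :
  P \is monic -> size P = m.+1 -> iter m (Dp 1) P = ((-1) ^+ m * (m`!)%:R)%:P.
Proof.
move=> mP sP; rewrite -(subrK 'X^m P) iterDpD iterDp_small ?monic_split //.
by rewrite add0r iterDp_Xn.
Qed.

Lemma partA (k : fieldType) (chark0 : [pchar k]%R =i pred0) (n c : nat) :
  (c <= n)%N -> exists A : 'M[k]_(n.+1), iter (2 * c) (@adx k n) A = Xmx k n ^+ c.
Proof.
move=> hcn.
pose rs : seq k := [seq (t%:R) | t <- iota 0 c] ++ [seq ((n.+1 + t)%:R) | t <- iota 0 c].
pose P0 : {poly k} := \prod_(r <- rs) ('X - r%:P).
pose K : k := ((2 * c)`!)%:R.
have K0 : K != 0 by move/pcharf0P: chark0 => ->; rewrite -lt0n fact_gt0.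
pose P := K^-1 *: P0.
have hPfin : iter (2 * c) (Dp 1) P = 1.
  rewrite iterDpZ iterDp_monic ?monic_prod_XsubC //.
    rewrite exprM sqrrN expr1n expr1n mul1r -/K -mul_polyC -polyCM mulVf //.
  by rewrite size_prod_XsubC size_cat !size_map size_iota mul2n addnn.
have hroot : forall s t, (t + s < c)%N ->
    (iter s (Dp 1) P).[t%:R] = 0 /\ (iter s (Dp 1) P).[(n.+1 + t)%:R] = 0.
  elim=> [|s IH] t hts.
    rewrite /= /P !hornerZ.
    have r1 : forall x, x \in rs -> P0.[x] = 0.
      by move=> x hx; apply/eqP; rewrite -rootE /P0 root_prod_XsubC.
    rewrite !r1 ?mulr0 //; rewrite mem_cat; apply/orP.
      by right; apply: map_f; rewrite mem_iota; lia.
    by left; apply: map_f; rewrite mem_iota; lia.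
  rewrite iterS !hornerDp !natr1 -addnS.
  have [h1 h2] := IH t ltac:(lia).
  have [h3 h4] := IH t.+1 ltac:(lia).
  by rewrite h1 h2 h3 h4 subrr.
pose A : 'M[k]_(n.+1) := \matrix_(i, j) (if (i + c == j)%N then P.[(j : nat)%:R] else 0).
exists A.
have key : forall s, (s <= 2 * c)%N -> forall i j, (i < n.+1)%N -> (j < n.+1)%N ->
    ent (iter s (@adx k n) A) i j =
    if (i + c == j + s)%N then (iter s (Dp 1) P).[j%:R] else 0.
  elim=> [|s IH] hs i j hi hj.
    by rewrite /= /ent hi hj /A mxE !inordK // addn0.
  rewrite iterS entad hi hj /= hornerDp natr1.
  have IH' := IH (ltnW hs).
  case: i hi => [|i'] hi.
    have [hj1|hj1] := ltnP j.+1 n.+1.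
      rewrite IH' // sub0r add0n.
      case: eqP => e1; case: eqP => e2; try lia.
        by rewrite (hroot s j ltac:(lia)).1 sub0r.
      by rewrite oppr0.
    rewrite ent_out; last by rewrite negb_and -!leqNgt hj1 orbT.
    by case: eqP => e1; try lia; rewrite subr0.
  rewrite IH' ?(ltnW hi) //.
  have [hj1|hj1] := ltnP j.+1 n.+1.
    rewrite IH' //.
    case: eqP => e1; case: eqP => e2; case: eqP => e3; try lia; by rewrite ?subr0.
  rewrite ent_out; last by rewrite negb_and -!leqNgt hj1 orbT.
  case: eqP => e1; case: eqP => e2; try lia; rewrite ?subr0 //.
  have -> : j = n by lia.
  have hr := (hroot s 0 ltac:(lia)).2; rewrite addn0 in hr.
  by rewrite hr subr0.
apply: mx_ent => i j hi hj.
rewrite key // hPfin hornerC entXn hi hj /=.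
by case: eqP => e1; case: eqP => e2; try lia.
Qed.



Definition Phi (k : fieldType) (n e : nat) (W : {poly k}) (M : 'M[k]_(n.+1)) : k :=
  \sum_(j < n.+1) W.[(j : nat)%:R] * ent M (j + e) j.

Definition Psi (k : fieldType) (n e : nat) (W : {poly k}) (M : 'M[k]_(n.+1)) : k :=
  \sum_(i < n.+1) W.[((i : nat) + e)%:R] * ent M i (i + e).

Lemma natSm1 (k : fieldType) m : (m.+1)%:R + - 1 = (m%:R : k).
Proof. by rewrite -natr1 addrK. Qed.

Lemma P1 (k : fieldType) (n e : nat) (W : {poly k}) (M : 'M[k]_(n.+1)) :
  W.[-1] = 0 -> W.[(n - e)%:R] = 0 ->
  Phi e.+1 W (adx M) = Phi e (Dp (-1) W) M.
Proof.
move=> hW1 hW2.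
have step : forall j : 'I_n.+1, W.[(j : nat)%:R] * ent (adx M) (j + e.+1) j =
    W.[(j : nat)%:R] * ent M (j + e) j - W.[(j : nat)%:R] * ent M (j + e).+1 j.+1.
  move=> j; rewrite addnS entad ltn_ord andbT -mulrBr.
  case: ifP => // hje.
  rewrite (ent_out M (i := (j + e).+1)) ?hje // subr0.
  have [hje2|hje2] := leqP (j + e) n.
    have -> : (j : nat) = (n - e)%N by move: hje; rewrite ltnS => /negbT; rewrite -ltnNge; lia.
    by rewrite hW2 !mul0r.
  by rewrite ent_out ?mulr0 // negb_and -leqNgt hje2.
rewrite /Phi (eq_bigr _ (fun j _ => step j)) sumrB.
under [X in _ - X = _]eq_bigr => j _ do rewrite -addSn.
pose F (j : nat) := W.[j%:R + -1] * ent M (j + e) j.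
have hF : forall j : 'I_n.+1, W.[(j : nat)%:R] * ent M ((j : nat).+1 + e) (j : nat).+1 = F (j : nat).+1.
  by move=> j; rewrite /F natSm1.
rewrite (eq_bigr _ (fun j _ => hF j)).
have e1 : \sum_(i < n.+2) F i = F 0%N + \sum_(i < n.+1) F i.+1 by rewrite big_ord_recl.
have e2 : \sum_(i < n.+2) F i = \sum_(i < n.+1) F i + F n.+1 by rewrite big_ord_recr.
have F0 : F 0%N = 0 by rewrite /F sub0r hW1 mul0r.
have Fn : F n.+1 = 0.
  by rewrite /F (ent_out M (i := (n.+1 + e)%N)) ?mulr0 // negb_and ltnn orbT.
have -> : \sum_(i < n.+1) F i.+1 = \sum_(i < n.+1) F i.
  by move: e1; rewrite e2 F0 Fn add0r addr0 => ->.
rewrite -sumrB; apply: eq_bigr => j _; rewrite /F hornerDp.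
by rewrite mulrBl.
Qed.

Lemma P2 (k : fieldType) (n e : nat) (W : {poly k}) (M : 'M[k]_(n.+1)) :
  Psi e W (adx M) = Psi e.+1 (Dp (-1) W) M.
Proof.
pose G (i : nat) := if i is i'.+1 then W.[(i' + e.+1)%:R] * ent M i' (i' + e.+1) else 0.
have step : forall i : 'I_n.+1, W.[((i : nat) + e)%:R] * ent (adx M) i (i + e) =
    G i - W.[((i : nat) + e)%:R] * ent M i (i + e.+1).
  move=> i; rewrite entad ltn_ord /= addnS.
  case: ifP => hie.
    rewrite mulrBr; congr (_ - _); rewrite /G.
    by case: (nat_of_ord i) => [|i']; rewrite ?mulr0 // addSnnS.
  rewrite mulr0 (ent_out M (i := i)) ?mulr0; last by rewrite negb_and; apply/orP; right; move/negbT: hie; rewrite -!leqNgt; lia.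
  rewrite subr0 /G; case: (nat_of_ord i) hie => [|i'] hie //.
  by rewrite ent_out ?mulr0 // negb_and -addSnnS hie orbT.
rewrite /Psi (eq_bigr _ (fun i _ => step i)) sumrB.
have e1 : \sum_(i < n.+2) G i = G 0%N + \sum_(i < n.+1) G i.+1 by rewrite big_ord_recl.
have e2 : \sum_(i < n.+2) G i = \sum_(i < n.+1) G i + G n.+1 by rewrite big_ord_recr.
have Gn : G n.+1 = 0.
  rewrite /G ent_out ?mulr0 // negb_and; apply/orP; right; rewrite -leqNgt; lia.
have -> : \sum_(i < n.+1) G i = \sum_(i < n.+1) G i.+1.
  by move: e1; rewrite e2 Gn addr0 add0r.
rewrite -sumrB; apply: eq_bigr => i _; rewrite /G hornerDp addnS natSm1.
by rewrite mulrBl.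
Qed.

Lemma Phi_iter (k : fieldType) (n v s : nat) (W : {poly k}) (M : 'M[k]_(n.+1)) :
  (s <= v)%N ->
  (forall s', (s' < s)%N -> (iter s' (Dp (-1)) W).[-1] = 0 /\
       (iter s' (Dp (-1)) W).[(n - (v - s'.+1))%:R] = 0) ->
  Phi v W (iter s (@adx k n) M) = Phi (v - s) (iter s (Dp (-1)) W) M.
Proof.
elim: s M => [|s IH] M hs hr; first by rewrite subn0.
rewrite iterSr IH ?(ltnW hs) //; last by move=> s' hs'; apply: hr; lia.
have -> : (v - s = (v - s.+1).+1)%N by lia.
by have [h1 h2] := hr s (ltnSn s); rewrite P1.
Qed.

Lemma Psi_iter (k : fieldType) (n s : nat) (W : {poly k}) (M : 'M[k]_(n.+1)) :
  Psi 0 W (iter s (@adx k n) M) = Psi s (iter s (Dp (-1)) W) M.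
Proof.
elim: s M => [|s IH] M //.
by rewrite iterSr IH P2.
Qed.

Lemma prodA (k : fieldType) (ts : seq nat) (j : nat) :
  \prod_(t <- ts) (j%:R - - ((t.+1)%:R : k)) = (\prod_(t <- ts) (j + t.+1))%:R.
Proof.
elim: ts => [|t ts IH]; first by rewrite !big_nil.
by rewrite !big_cons IH opprK natrM natrD.
Qed.

Lemma prodB (k : fieldType) (ts : seq nat) (a j : nat) : (j <= a)%N ->
  \prod_(t <- ts) (j%:R - ((a + t)%:R : k)) =
  (-1) ^+ (size ts) * (\prod_(t <- ts) (a + t - j))%:R.
Proof.
move=> hja; elim: ts => [|t ts IH]; first by rewrite !big_nil expr0 mul1r.
rewrite !big_cons IH natrM natrB; last by lia.
rewrite /= exprS; ring.
Qed.

Lemma partB (k : fieldType) (chark0 : [pchar k]%R =i pred0) (n v p : nat)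
  (A : 'M[k]_(n.+1)) :
  (v <= n)%N -> iter p (@adx k n) A = Xmx k n ^+ v -> (p <= 2 * v)%N.
Proof.
move=> hvn hA; rewrite leqNgt; apply/negP => hp.
pose rs : seq k := [seq - ((t.+1)%:R) | t <- iota 0 v] ++
                   [seq (((n - v).+1 + t)%:R) | t <- iota 0 v].
pose W : {poly k} := \prod_(r <- rs) ('X - r%:P).
have hroot : forall s t, (t + s < v)%N ->
    (iter s (Dp (-1)) W).[- ((t.+1)%:R)] = 0 /\
    (iter s (Dp (-1)) W).[((n - v).+1 + s + t)%:R] = 0.
  elim=> [|s IH] t hts.
    have r1 : forall x, x \in rs -> W.[x] = 0.
      by move=> x hx; apply/eqP; rewrite -rootE /W root_prod_XsubC.
    rewrite /= !r1 // mem_cat; apply/orP.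
      by right; rewrite addn0; apply: map_f; rewrite mem_iota; lia.
    by left; apply: map_f; rewrite mem_iota; lia.
  rewrite iterS !hornerDp.
  have [h1 h2] := IH t ltac:(lia).
  have [h3 h4] := IH t.+1 ltac:(lia).
  split.
    by rewrite -opprD natr1 h1 h3 subrr.
  have -> : ((n - v).+1 + s.+1 + t = ((n - v).+1 + s + t).+1)%N by lia.
  rewrite natSm1 h2.
  have -> : (((n - v).+1 + s + t).+1 = (n - v).+1 + s + t.+1)%N by lia.
  by rewrite h4 subrr.
have sW : size W = (2 * v).+1.
  by rewrite size_prod_XsubC size_cat !size_map size_iota mul2n addnn.
have Phi0 : Phi v W (iter p (@adx k n) A) = 0.
  have -> : p = (v + (p - v))%N by lia.
  rewrite iterD Phi_iter //; last first.
    move=> s' hs'; have [h1 h2] := hroot s' 0%N ltac:(lia).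
    split; first by move: h1; rewrite mulr1n.
    have -> : (n - (v - s'.+1) = (n - v).+1 + s' + 0)%N by lia.
    exact: h2.
  have -> : Phi (v - v) (iter v (Dp (-1)) W) (iter (p - v) (@adx k n) A) =
            Psi 0 (iter v (Dp (-1)) W) (iter (p - v) (@adx k n) A).
    by rewrite subnn /Phi /Psi; apply: eq_bigr => j _; rewrite !addn0.
  rewrite Psi_iter -iterD iterDp_small; last by rewrite sW; lia.
  by rewrite /Psi big1 // => i _; rewrite horner0 mul0r.
pose g (j : 'I_n.+1) : nat := if ((j : nat) + v < n.+1)%N then
   ((\prod_(t <- iota 0 v) ((j : nat) + t.+1)) *
   (\prod_(t <- iota 0 v) ((n - v).+1 + t - j)))%N else 0%N.
have PhiX : Phi v W (Xmx k n ^+ v) = (-1) ^+ v * (\sum_j g j)%:R.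
  rewrite /Phi natr_sum mulr_sumr; apply: eq_bigr => j _.
  rewrite entXn ltn_ord andbT eqxx /g.
  case: ifP => hj; last by rewrite !mulr0.
  rewrite mulr1 /W horner_prod big_cat /= !big_map.
  under eq_bigr => r _ do rewrite hornerXsubC.
  under [X in _ * X = _]eq_bigr => r _ do rewrite hornerXsubC.
  rewrite prodA prodB ?size_iota; last by lia.
  rewrite natrM; ring.
have : Phi v W (Xmx k n ^+ v) != 0.
  rewrite PhiX mulf_eq0 signr_eq0 /=.
  move/pcharf0P: chark0 => ->; rewrite -lt0n.
  rewrite big_ord_recl; apply: ltn_addr.
  rewrite /g /= add0n ltnS hvn muln_gt0; apply/andP; split; apply: prodn_gt0 => t; lia.
by rewrite -hA Phi0 eqxx.
Qed.



Lemma sum_half n : (\sum_(1 <= p < (2 * n).+1) (p.+1 %/ 2) = n * (n + 1))%N.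
Proof.
elim: n => [|n IH]; first by rewrite big_geq.
have -> : ((2 * n.+1).+1 = ((2 * n).+1).+2)%N by lia.
rewrite big_nat_recr /=; last by lia.
rewrite big_nat_recr /=; last by lia.
rewrite IH.
have -> : ((2 * n).+2 %/ 2 = n.+1)%N by lia.
have -> : ((2 * n).+3 %/ 2 = n.+1)%N by lia.
lia.
Qed.

Lemma mulopX (k : fieldType) n : mulop n ('X : {poly k}) = Xmx k n.
Proof. by rewrite /mulop horner_mx_X. Qed.

Lemma mulopXn (k : fieldType) n v : mulop n ('X^v * 1 : {poly k}) = Xmx k n ^+ v.
Proof. by rewrite mulr1 /mulop rmorphXn /= horner_mx_X. Qed.

Lemma foldr_nseqX (k : fieldType) n m (d : 'M[k]_(n.+1)) :
  foldr (fun f e => commx (mulop n f) e) d (nseq m 'X) = iter m (@adx k n) d.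
Proof. by elim: m => //= m ->; rewrite mulopX. Qed.

Lemma inDp_ker (k : fieldType) n p (d : 'M[k]_(n.+1)) :
  inDp p d -> iter p.+1 (@adx k n) d = 0.
Proof. by move=> h; rewrite -foldr_nseqX h // size_nseq. Qed.

Lemma mulop_comm (k : fieldType) n (f : {poly k}) :
  mulop n f *m Xmx k n = Xmx k n *m mulop n f.
Proof. exact: comm_horner_mx. Qed.

Lemma kill (k : fieldType) n (f : {poly k}) (E : 'M[k]_(n.+1)) :
  adx E = 0 -> commx (mulop n f) E = 0.
Proof.
move=> /eqP; rewrite /adx /commx subr_eq0 => /eqP hE.
have : comm_mx E (mulop n f) by apply: comm_mx_horner; rewrite /comm_mx hE.
by rewrite /comm_mx => ->; rewrite subrr.
Qed.

Lemma ab4 (V : zmodType) (a b c e : V) : a - b + e - c = a - c + e - b.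
Proof. by rewrite -!addrA; congr (_ + _); rewrite addrCA [e - b]addrC addrCA [RHS]addrCA [- c + e]addrC. Qed.

Lemma ad_commx (k : fieldType) n (f : {poly k}) (d : 'M[k]_(n.+1)) :
  adx (commx (mulop n f) d) = commx (mulop n f) (adx d).
Proof.
have h := mulop_comm n f.
rewrite /adx /commx; set N := Xmx k n; set F := mulop n f.
rewrite !mulmxBr !mulmxBl !mulmxA -h.
have -> : d *m F *m N = d *m N *m F by rewrite -!mulmxA h.
rewrite !opprB !addrA; exact: ab4.
Qed.

Lemma iter_commx (k : fieldType) n m (f : {poly k}) (d : 'M[k]_(n.+1)) :
  iter m (@adx k n) (commx (mulop n f) d) = commx (mulop n f) (iter m (@adx k n) d).
Proof. by elim: m => //= m ->; rewrite ad_commx. Qed.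

Lemma ker_inDp (k : fieldType) n p (d : 'M[k]_(n.+1)) :
  iter p.+1 (@adx k n) d = 0 -> inDp p d.
Proof.
elim: p d => [|p IH] d hd fs.
  case: fs => [|f [|]] //= _; exact: kill.
case/lastP: fs => [|fs f] //; rewrite size_rcons => /eqP; rewrite eqSS => /eqP hs.
rewrite foldr_rcons; apply: IH hs.
by rewrite iter_commx kill.
Qed.

Lemma entXnl (k : fieldType) n v (G : 'M[k]_(n.+1)) i j :
  ent (Xmx k n ^+ v *m G) i j =
  if (i < n.+1)%N && (j < n.+1)%N then (if (v <= i)%N then ent G (i - v) j else 0) else 0.
Proof.
elim: v i j => [|v IH] i j.
  rewrite expr0 mul1mx /ent subn0; by case: ifP.
rewrite exprS -mulmxE -mulmxA entXl; case: ifP => // /andP[hi hj].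
case: i hi => [|i'] hi //=.
rewrite IH (ltnW hi) hj /= ltnS subSS //.
Qed.

Lemma vp_value (k : fieldType) (chark0 : [pchar k]%R =i pred0) n p v :
  (1 <= p <= 2 * n)%N -> vp_spec k n p v -> v = (p.+1 %/ 2)%N.
Proof.
move=> /andP[hp1 hp2] [hvn hspec].
set c := (p.+1 %/ 2)%N.
have hc : (c <= n)%N by rewrite /c; lia.
have hpc : (p <= 2 * c)%N by rewrite /c; lia.
apply/eqP; rewrite eqn_leq; apply/andP; split.
  have [A hA] := partA chark0 hc.
  pose d := iter (2 * c - p) (@adx k n) A.
  have hd : iter p (@adx k n) d = Xmx k n ^+ c.
    by rewrite /d -iterD subnKC.
  have hin : inDp p d.
    apply: ker_inDp; rewrite iterS hd /adx /commx !mulmxE -exprS -exprSr subrr //.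
  have [g hg] := (hspec (Xmx k n ^+ c)).1 (ex_intro _ d (conj hin hd)).
  rewrite leqNgt; apply/negP => hvc.
  have := congr1 (fun M => ent M c 0) hg.
  rewrite /= entXn /mulop rmorphM /= rmorphXn /= horner_mx_X -mulmxE entXnl.
  rewrite ltnS hc /= eqxx leqNgt hvc /= => /eqP; rewrite oner_eq0.
  by [].
have [d [hin hd]] := (hspec (Xmx k n ^+ v)).2 (ex_intro _ 1 (esym (mulopXn k n v))).
have := partB chark0 hvn hd.
rewrite /c; lia.
Qed.

Theorem corollary4 (k : fieldType) (chark0 : [pchar k]%R =i pred0)
  (n : nat) (hn : (1 <= n)%N) (v : nat -> nat)
  (hv : forall p : nat, (1 <= p <= 2 * n)%N -> vp_spec k n p (v p)) :
  (\sum_(1 <= p < (2 * n).+1) v p)%N = (n * (n + 1))%N.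
Proof.
rewrite -sum_half; apply: eq_big_nat => p hp.
have hp' : (1 <= p <= 2 * n)%N by move: hp; rewrite ltnS.
exact: (vp_value chark0 hp' (hv p hp')).
Qed.
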